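(* For any metric space $(\mathcal{X},\rho)$, any $\gamma>0$, and any integer $1\le d\le|\mathsf{C}(\mathcal{X},\rho,2\gamma)|$, there exists a class $\mathcal{H}\subseteq\{-1,+1\}^{\mathcal{X}}$ with $\mathsf{vc}(\mathcal{H})=d$ such that for any (possibly randomized) online learner there exists a sequence $(x_1,y_1),\dots,(x_T,y_T)\in\mathcal{X}\times\{-1,+1\}$ with $$\sum_{t=1}^T\mathbb{E}\,\mathbb{1}[\hat y_t\neq y_t]-\mathsf{OPT}^{\gamma}_{\mathrm{pert}}\ge\Omega\!\left(\sqrt{T\cdot\mathsf{vc}(\mathcal{H})\ln\!\left(\frac{|\mathsf{C}(\mathcal{X},\rho,2\gamma)|}{\mathsf{vc}(\mathcal{H})}\right)}\right),$$ where $\mathsf{OPT}^{\gamma}_{\mathrm{pert}}=\min_{h\in\mathcal{H}}\sum_{t=1}^T\max_{z_t\in B(x_t,\gamma)}\mathbb{1}[h(z_t)\neq y_t]$.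
   Context: Online binary classification: on rounds $t=1,\dots,T$ the adversary reveals $x_t\in\mathcal{X}$, the learner outputs $\hat y_t\in\{-1,+1\}$, then $y_t$ is revealed; the expectation is over the learner's randomness. $\mathsf{vc}$ is the VC dimension. $B(x,\gamma)=\{z\in\mathcal{X}:\rho(x,z)\le\gamma\}$. A $\gamma$-cover of $\mathcal{X}$ is a set $\mathcal{Z}\subseteq\mathcal{X}$ such that every $x\in\mathcal{X}$ is within $\rho$-distance $\gamma$ of some element of $\mathcal{Z}$; $|\mathsf{C}(\mathcal{X},\rho,\gamma)|$ denotes the minimal cardinality of a $\gamma$-cover. $\Omega(\cdot)$ hides a positive absolute constant. *)

(* Defs.v *)
From HB Require Import structures.
From mathcomp Require Import all_boot all_order all_algebra.
From mathcomp Require Import all_classical all_reals all_analysis.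
From mathcomp Require Import Rstruct.
Set Implicit Arguments. Unset Strict Implicit. Unset Printing Implicit Defensive.
Import Order.TTheory GRing.Theory Num.Theory.
Local Open Scope classical_set_scope.
Local Open Scope ring_scope.

Section Defs.
Variable R : realType.
Variable X : Type.

Definition is_metric (rho : X -> X -> R) : Prop :=
  [/\ (forall x y, 0 <= rho x y),
      (forall x y, rho x y = 0 <-> x = y),
      (forall x y, rho x y = rho y x) &
      (forall x y z, rho x z <= rho x y + rho y z)].

Definition ball_rho (rho : X -> X -> R) (x : X) (gamma : R) : set X :=
  [set z | rho x z <= gamma].

Definition is_cover (rho : X -> X -> R) (gamma : R) (Z : set X) : Prop :=
  forall x : X, exists2 z, Z z & rho x z <= gamma.

(* N = |C(X, rho, gamma)|: the minimal cardinality of a gamma-cover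
   (here assumed to be finite: some finite cover exists). *)
Definition covering_number (rho : X -> X -> R) (gamma : R) (N : nat) : Prop :=
  (exists Z : set X, is_cover rho gamma Z /\ (Z #= `I_N)%card) /\
  (forall (Z : set X) (n : nat), is_cover rho gamma Z -> (Z #= `I_n)%card -> (N <= n)%N).

(* labels {-1,+1} are encoded as bool (true = +1, false = -1) *)
Definition shatters (H : set (X -> bool)) (S : set X) : Prop :=
  forall f : X -> bool, exists2 h, H h & forall x, S x -> h x = f x.

Definition vc_dim (H : set (X -> bool)) (d : nat) : Prop :=
  (exists S : set X, (S #= `I_d)%card /\ shatters H S) /\
  (forall (S : set X) (n : nat), (S #= `I_n)%card -> shatters H S -> (n <= d)%N).

(* A (possibly randomized) online learner: given the history
   [(x_1,y_1);...;(x_{t-1},y_{t-1})] and x_t, it returns the probability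
   that it predicts hat y_t = +1 (true). *)
Definition learner := seq (X * bool) -> X -> R.

Definition valid_learner (L : learner) : Prop :=
  forall hist x, 0 <= L hist x <= 1.

Fixpoint exp_mistakes_from (L : learner) (hist : seq (X * bool))
    (s : seq (X * bool)) : R :=
  match s with
  | [::] => 0
  | (x, y) :: s' =>
      (if y then 1 - L hist x else L hist x)
      + exp_mistakes_from L (rcons hist (x, y)) s'
  end.

Definition exp_mistakes (L : learner) (s : seq (X * bool)) : R :=
  exp_mistakes_from L [::] s.

Definition pert_loss (rho : X -> X -> R) (gamma : R) (h : X -> bool)
    (p : X * bool) : R :=
  sup [set ((h z != p.2)%:R : R) | z in ball_rho rho p.1 gamma].

Definition opt_pert (rho : X -> X -> R) (gamma : R) (H : set (X -> bool))
    (s : seq (X * bool)) : R :=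
  inf [set (\sum_(p <- s) pert_loss rho gamma h p) | h in H].

End Defs.

(* Main.v *)
Require Import Defs.
From HB Require Import structures.
From mathcomp Require Import all_boot all_order all_algebra.
From mathcomp Require Import all_classical all_reals all_analysis.
From mathcomp Require Import Rstruct.
From mathcomp Require Import ring lra zify.
Import Order.TTheory GRing.Theory Num.Theory.
Local Open Scope classical_set_scope.
Local Open Scope ring_scope.

Section Avg.
Variable R : realType.

Fixpoint avg (n : nat) (F : seq bool -> R) : R :=
  if n is n'.+1 then
    (avg n' (fun u => F (true :: u)) + avg n' (fun u => F (false :: u))) / 2
  else F [::].

Lemma avg_ext n (F G : seq bool -> R) : (forall u, size u = n -> F u = G u) -> avg n F = avg n G.
Proof.
elim: n F G => [|n IH] F G H /=; first exact: H.
rewrite (@IH (fun u => F (true :: u)) (fun u => G (true :: u))); last by move=> u su; apply: H; rewrite /= su.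
by rewrite (IH (fun u => F (false :: u)) (fun u => G (false :: u))) // => u su; apply: H; rewrite /= su.
Qed.

Lemma avgD n F G : avg n (fun u => F u + G u) = avg n F + avg n G.
Proof.
elim: n F G => [|n IH] F G //=.
rewrite (IH (fun u => F (true :: u))) (IH (fun u => F (false :: u))).
by rewrite !mulrDl; lra.
Qed.

Lemma avgZ n a F : avg n (fun u => a * F u) = a * avg n F.
Proof.
elim: n F => [|n IH] F //=.
rewrite (IH (fun u => F (true :: u))) (IH (fun u => F (false :: u))).
rewrite -mulrDr; lra.
Qed.

Lemma avg_cst n a : avg n (fun _ => a) = a.
Proof. elim: n => [|n IH] //=; rewrite IH; lra. Qed.

Lemma avgB n F G : avg n (fun u => F u - G u) = avg n F - avg n G.
Proof.
rewrite avgD; congr (_ + _).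
rewrite (avg_ext _ _ (fun u => (-1) * G u)); last by move=> u _; rewrite mulN1r.
by rewrite avgZ mulN1r.
Qed.

Lemma avg_le n F G : (forall u, size u = n -> F u <= G u) -> avg n F <= avg n G.
Proof.
elim: n F G => [|n IH] F G H /=; first exact: H.
apply: ler_wpM2r; first by rewrite invr_ge0.
apply: lerD; apply: IH => u su; apply: H; by rewrite /= su.
Qed.

Lemma avg_exists n F : exists u, size u = n /\ avg n F <= F u.
Proof.
elim: n F => [|n IH] F /=; first by exists [::].
have [u [su Hu]] := IH (fun u => F (true :: u)).
have [v [sv Hv]] := IH (fun u => F (false :: u)).
have [le|lt] := lerP (avg n (fun u => F (false :: u))) (avg n (fun u => F (true :: u))).
- exists (true :: u); split; first by rewrite /= su.
  lra.
- exists (false :: v); split; first by rewrite /= sv.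
  lra.
Qed.

Lemma avg_cat n1 n2 F :
  avg (n1 + n2) F = avg n1 (fun u => avg n2 (fun v => F (u ++ v))).
Proof.
elim: n1 F => [|n1 IH] F //=.
by rewrite (IH (fun u => F (true :: u))) (IH (fun u => F (false :: u))).
Qed.

Fixpoint rs (u : seq bool) : R :=
  if u is y :: u' then (if y then 1 else -1) + rs u' else 0.

Lemma avg_rs n (F : R -> R) :
  avg n.+1 (fun u => F (rs u)) = avg n (fun u => (F (1 + rs u) + F (-1 + rs u)) / 2).
Proof.
rewrite [RHS](avg_ext _ _ (fun u => 2^-1 * (F (1 + rs u) + F (-1 + rs u)))).
  by rewrite avgZ avgD /= mulrC.
by move=> u _; rewrite mulrC.
Qed.

Lemma avg_rs2 n : avg n (fun u => rs u ^+ 2) = n%:R.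
Proof.
elim: n => [|n IH]; first by rewrite /= expr0n.
rewrite (avg_rs n (fun x => x ^+ 2)).
rewrite (avg_ext _ _ (fun u => rs u ^+ 2 + 1)); last by move=> u _ /=; field.
by rewrite avgD IH avg_cst -natr1.
Qed.

Lemma avg_rs4 n : avg n (fun u => rs u ^+ 4) = 3 * n%:R ^+ 2 - 2 * n%:R.
Proof.
elim: n => [|n IH]; first by rewrite /= expr0n /=; ring.
rewrite (avg_rs n (fun x => x ^+ 4)).
rewrite (avg_ext _ _ (fun u => rs u ^+ 4 + (6 * rs u ^+ 2 + 1))); last by move=> u _ /=; field.
rewrite avgD IH avgD avgZ avg_rs2 avg_cst -natr1; ring.
Qed.

Lemma avg_abs_ge0 n : 0 <= avg n (fun u => `|rs u|).
Proof. by rewrite -(avg_cst n 0); apply: avg_le. Qed.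

Lemma pointwise (a t : R) : 0 < a -> 0 <= t -> t ^+ 2 <= a * t + t ^+ 4 / a ^+ 2.
Proof.
move=> a0 t0.
have a20 : 0 < a ^+ 2 by rewrite exprn_gt0.
rewrite -(ler_pM2r a20) mulrDl mulfVK ?gt_eqF //.
have [ta|ta'] := lerP t a.
- have : t * (a ^+ 2 * t) <= t * (a ^+ 2 * a) by apply: ler_wpM2l => //; apply: ler_wpM2l => //; apply: ltW.
  have : 0 <= t ^+ 4 by apply: exprn_ge0.
  move=> h1 h2; rewrite !expr2 in h2 *; nra.
- have h : a ^+ 2 <= t ^+ 2 by rewrite ler_pXn2r // ?ltW // nnegrE ltW.
  have : t ^+ 2 * a ^+ 2 <= t ^+ 2 * t ^+ 2 by apply: ler_wpM2l => //; apply: exprn_ge0.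
  have : 0 <= a * t * a ^+ 2 by apply: mulr_ge0 => //; apply: mulr_ge0 => //; apply: ltW.
  move=> h1 h2; rewrite -exprD /= in h2; lra.
Qed.

Lemma avg_abs_sq n : n%:R <= 24 * avg n (fun u => `|rs u|) ^+ 2.
Proof.
case: n => [|n]; first by rewrite mulr_ge0 // exprn_ge0 // avg_abs_ge0.
set m := n.+1.
have m0 : 0 < (m%:R : R) by rewrite ltr0n.
pose a : R := Num.sqrt (6 * m%:R).
have a0 : 0 < a by rewrite sqrtr_gt0 mulr_gt0.
have a2 : a ^+ 2 = 6 * m%:R by rewrite sqr_sqrtr // ltW // mulr_gt0.
pose E := avg m (fun u => `|rs u|).
have H1 : avg m (fun u => rs u ^+ 2) <= avg m (fun u => a * `|rs u| + rs u ^+ 4 / a ^+ 2).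
  apply: avg_le => u _.
  have := @pointwise a `|rs u| a0 (normr_ge0 (rs u)).
  have e2 : `|rs u| ^+ 2 = rs u ^+ 2 by rewrite real_normK ?num_real.
  have e4 : `|rs u| ^+ 4 = rs u ^+ 4 by rewrite (_ : 4 = 2 * 2)%N // !exprM e2.
  by rewrite e2 e4.
have e : avg m (fun u => rs u ^+ 4 / a ^+ 2) = avg m (fun u => (a ^+ 2)^-1 * rs u ^+ 4).
  by apply: avg_ext => u _; rewrite mulrC.
rewrite avg_rs2 avgD avgZ e in H1.
rewrite avgZ avg_rs4 a2 -/E in H1.
have H2 : (6 * m%:R : R)^-1 * (3 * m%:R ^+ 2 - 2 * m%:R) <= m%:R / 2.
  rewrite ler_pdivrMl ?mulr_gt0 //; rewrite expr2; nra.
have H3 : (m%:R / 2 : R) <= a * E by lra.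
have E0 : 0 <= E by apply: avg_abs_ge0.
have H3' : (m%:R : R) <= 2 * (a * E) by lra.
have H4 : (m%:R : R) ^+ 2 <= (2 * (a * E)) ^+ 2.
  rewrite ler_pXn2r // nnegrE; [lra|]. apply: mulr_ge0 => //; apply: mulr_ge0 => //; exact: ltW.
have e' : (2 * (a * E)) ^+ 2 = 4 * a ^+ 2 * E ^+ 2 by ring.
rewrite e' a2 expr2 in H4.
have : (m%:R * m%:R : R) <= m%:R * (24 * E ^+ 2) by lra.
by rewrite ler_pM2l.
Qed.

End Avg.

Set Implicit Arguments. Unset Strict Implicit. Unset Printing Implicit Defensive.

Section Packing.
Variables (R : realType) (X : Type) (rho : X -> X -> R).
Hypothesis hm : is_metric rho.

Lemma rho_xx x : rho x x = 0.
Proof. by case: hm => _ h _ _; apply/h. Qed.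

Lemma rho_sym x y : rho x y = rho y x.
Proof. by case: hm. Qed.

Lemma rho_tri x y z : rho x z <= rho x y + rho y z.
Proof. by case: hm. Qed.

Lemma packing (gam : R) N : 0 <= gam -> covering_number rho gam N -> (0 < N)%N ->
  exists c : nat -> X, forall i j, (i < N)%N -> (j < N)%N -> i != j ->
    gam < rho (c i) (c j).
Proof.
move=> g0 [_ Hmin] N0.
have step : forall m (c : nat -> X), (m < N)%N ->
    (forall i j, (i < m)%N -> (j < m)%N -> i != j -> gam < rho (c i) (c j)) ->
    exists x, forall i, (i < m)%N -> gam < rho x (c i).
  move=> m c mN sep.
  have inj : {in `I_m &, injective c}.
    move=> i j /set_mem /= im /set_mem /= jm cij.
    apply/eqP; apply: contraT => nij.
    have := sep i j im jm nij; rewrite cij rho_xx; lra.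
  apply: contrapT => Hn.
  have cov : is_cover rho gam (c @` `I_m).
    move=> x.
    have : ~ (forall i, (i < m)%N -> gam < rho x (c i)) by move=> H; apply: Hn; exists x.
    move=> /existsNP [i] /not_implyP [im Hi].
    exists (c i); first by exists i.
    by rewrite leNgt; apply/negP.
  have := Hmin _ _ cov (inj_card_eq inj).
  by rewrite leqNgt mN.
have [x0 _] : exists x : X, True.
  apply: contrapT => Hn.
  have cov : is_cover rho gam set0 by move=> x; exfalso; apply: Hn; exists x.
  have e0 : `I_0 = set0 :> set nat by apply/seteqP; split => i //=.
  have := Hmin _ 0%N cov; rewrite e0 => /(_ (card_eq00 _ _)).
  by rewrite leqn0 => /eqP N00; rewrite N00 in N0.
suff : forall m, (m <= N)%N -> exists c : nat -> X,
    forall i j, (i < m)%N -> (j < m)%N -> i != j -> gam < rho (c i) (c j).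
  by move=> /(_ N (leqnn N)).
elim=> [|m IH] mN; first by exists (fun _ => x0).
have [c sep] := IH (ltnW mN).
have [x Hx] := step m c mN sep.
exists (fun i => if i == m then x else c i) => i j; rewrite !ltnS => im jm nij.
case: eqP => [ei|nei]; case: eqP => [ej|nej].
- by rewrite ei ej eqxx in nij.
- by apply: Hx; rewrite ltn_neqAle jm andbT; apply/eqP.
- rewrite rho_sym; apply: Hx; rewrite ltn_neqAle im andbT; apply/eqP => //.
- apply: sep => //; rewrite ltn_neqAle ?im ?jm andbT; apply/eqP => //.
Qed.
End Packing.

Fixpoint idx (r : seq bool) : nat :=
  if r is b :: r' then ((idx r').*2.+1 + b)%N else 0%N.

Lemma idx_inj : injective idx.
Proof.
elim=> [|b1 r1 IH] [|b2 r2] //= h.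
  have [eb ei] : b1 = b2 /\ idx r1 = idx r2 by case: b1 b2 h => [] [] /=; lia.
  by rewrite eb (IH _ ei).
Qed.

Lemma idx_lt r : ((idx r).+2 <= 2 ^ (size r).+1)%N.
Proof.
elim: r => [|b r IH] //=.
rewrite expnS; case: b => /=; lia.
Qed.

Fixpoint pathr (f : nat -> bool) (n : nat) : seq bool :=
  if n is n'.+1 then f n' :: pathr f n' else [::].

Lemma size_pathr f n : size (pathr f n) = n.
Proof. by elim: n => //= n ->. Qed.

Lemma pathr_ext f f' n : (forall l, (l < n)%N -> f l = f' l) -> pathr f n = pathr f' n.
Proof.
elim: n => [|n IH] //= H; rewrite H // IH // => l ln; apply: H; exact: ltnW.
Qed.

Lemma pathr_eqE f f' n n' : pathr f n = pathr f' n' ->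
  n = n' /\ forall l, (l < n)%N -> f l = f' l.
Proof.
move=> e; have en : n = n' by rewrite -(size_pathr f n) e size_pathr.
subst n'; split=> //.
elim: n e => [|n IH] //= [e1 e2] l; rewrite ltnS leq_eqVlt => /orP [/eqP ->//|].
exact: IH.
Qed.

Section Struct.
Variables (R : realType) (X : Type) (rho : X -> X -> R) (gamma : R).
Hypothesis hm : is_metric rho.
Hypothesis g0 : 0 < gamma.
Variables (N d K k : nat) (c : nat -> X).
Hypothesis sep : forall i j, (i < N)%N -> (j < N)%N -> i != j ->
  2 * gamma < rho (c i) (c j).
Hypothesis dKN : (d * K <= N)%N.
Hypothesis kK : (2 ^ k <= K.+1)%N.
Hypothesis k0 : (0 < k)%N.

Local Notation B x := (ball_rho rho x gamma).

Lemma ball_center x : B x x.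
Proof. by rewrite /ball_rho /= rho_xx // ltW. Qed.

Lemma ball_uniq i j z : (i < N)%N -> (j < N)%N -> B (c i) z -> B (c j) z -> i = j.
Proof.
move=> iN jN hi hj; apply/eqP; apply: contraT => nij.
have := sep iN jN nij; have := rho_tri hm (c i) z (c j).
rewrite (rho_sym hm z (c j)); rewrite /ball_rho /= in hi hj; lra.
Qed.

Definition center g j := c (g * K + j).

Lemma K0 : (0 < K)%N.
Proof.
have : (2 <= 2 ^ k)%N by rewrite -{1}(expn1 2) leq_exp2l.
move=> h; have := leq_trans h kK; lia.
Qed.

Lemma cidx_lt g j : (g < d)%N -> (j < K)%N -> (g * K + j < N)%N.
Proof.
move=> gd jK; apply: (leq_trans _ dKN).
apply: (@leq_trans (g * K + K)); first by rewrite ltn_add2l.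
by rewrite -mulSnr leq_mul2r gd orbT.
Qed.

Lemma cidx_inj g j g' j' : (j < K)%N -> (j' < K)%N ->
  (g * K + j = g' * K + j')%N -> g = g' /\ j = j'.
Proof.
move=> jK j'K e.
have := congr1 (divn^~ K) e; rewrite !divnMDl ?K0 // !divn_small // !addn0 => eg.
by split=> //; subst g'; move/addnI: e.
Qed.

Lemma idx_ltK r : (size r < k)%N -> (idx r < K)%N.
Proof.
move=> sk; have h := idx_lt r.
have : (2 ^ (size r).+1 <= 2 ^ k)%N by rewrite leq_exp2l.
move=> h2; have := leq_trans h (leq_trans h2 kK); lia.
Qed.

Definition hyp (S : nat -> nat -> bool) : X -> bool := fun x =>
  `[< exists g n, [/\ (g < d)%N, (n < k)%N,
        B (center g (idx (pathr (S g) n))) x & S g n] >].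

Lemma hyp_inv S x g j : (g < d)%N -> (j < K)%N -> B (center g j) x -> hyp S x ->
  exists n, [/\ (n < k)%N, idx (pathr (S g) n) = j & S g n].
Proof.
move=> gd jK bx /asboolP [g' [n [g'd nk bx' Sn]]].
have jK' : (idx (pathr (S g') n) < K)%N by rewrite idx_ltK // size_pathr.
have := ball_uniq (cidx_lt gd jK) (cidx_lt g'd jK') bx bx'.
move=> /(cidx_inj jK jK') [eg ej]; subst g'.
by exists n; split.
Qed.

Lemma hyp_center S g n x : (g < d)%N -> (n < k)%N ->
  B (center g (idx (pathr (S g) n))) x -> hyp S x = S g n.
Proof.
move=> gd nk bx.
have jK : (idx (pathr (S g) n) < K)%N by rewrite idx_ltK // size_pathr.
case Sgn: (S g n).
  by apply/asboolP; exists g, n; split.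
apply/negbTE/negP => /(hyp_inv gd jK bx) [n' [n'k /idx_inj /pathr_eqE [en _] Sn']].
by subst n'; rewrite Sgn in Sn'.
Qed.

Lemma hyp_ball_imp S i z z' : (i < N)%N -> B (c i) z -> B (c i) z' -> hyp S z -> hyp S z'.
Proof.
move=> iN bz bz' /asboolP [g [n [gd nk bx Sn]]].
have jK : (idx (pathr (S g) n) < K)%N by rewrite idx_ltK // size_pathr.
have ei := ball_uniq (cidx_lt gd jK) iN bx bz.
apply/asboolP; exists g, n; split => //.
by rewrite /center ei.
Qed.

Lemma hyp_ball S i z z' : (i < N)%N -> B (c i) z -> B (c i) z' -> hyp S z = hyp S z'.
Proof.
move=> iN bz bz'; apply/idP/idP; [exact: hyp_ball_imp bz bz' | exact: hyp_ball_imp bz' bz].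
Qed.

Definition Hcls : set (X -> bool) := [set h | exists S, h = hyp S].

Lemma vc_lower : exists S : set X, (S #= `I_d)%card /\ shatters Hcls S.
Proof.
exists ((fun g => center g 0) @` `I_d); split.
  apply: inj_card_eq => g g' /set_mem /= gd /set_mem /= g'd e.
  have h1 := cidx_lt gd K0; have h2 := cidx_lt g'd K0.
  have [//|ne] := eqVneq (g * K + 0)%N (g' * K + 0)%N.
    by move=> /(cidx_inj K0 K0) [].
  have := sep h1 h2 ne; rewrite /center in e; rewrite e rho_xx //.
  by move=> hh; exfalso; rewrite ltNge mulr_ge0 // ltW in hh.
move=> f; exists (hyp (fun g _ => f (center g 0))); first by exists (fun g _ => f (center g 0)).
move=> x [g /= gd <-].
by rewrite (hyp_center gd k0 (ball_center _)).
Qed.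

Lemma key Sx x1 x2 g j1 j2 S n1 n2 : shatters Hcls Sx -> Sx x1 -> Sx x2 -> x1 <> x2 ->
  (g < d)%N -> (j1 < K)%N -> (j2 < K)%N -> B (center g j1) x1 -> B (center g j2) x2 ->
  (n1 < n2)%N -> (n2 < k)%N -> idx (pathr (S g) n1) = j1 -> S g n1 ->
  idx (pathr (S g) n2) = j2 -> False.
Proof.
move=> sh S1 S2 nx gd j1K j2K b1 b2 n12 n2k e1 Sn1 e2.
have [h [S' ->] Hh] := sh (fun z => `[< z = x2 >]).
have hx2 := Hh x2 S2; have hx1 := Hh x1 S1.
have : hyp S' x2 by rewrite hx2; apply/asboolP.
move=> /(hyp_inv gd j2K b2) [n2' [n2'k e2' _]].
rewrite -e2 in e2'; move: e2' => /idx_inj /pathr_eqE [en ES]; subst n2'.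
have ep : pathr (S' g) n1 = pathr (S g) n1.
  by apply: pathr_ext => l ln; apply: ES; apply: ltn_trans n12.
rewrite -e1 -ep in b1.
have := hyp_center gd (ltn_trans n12 n2k) b1.
rewrite hx1 ES // Sn1 => ee; apply: nx; apply/asboolP; by rewrite ee.

Qed.

Lemma vc_upper Sx n : (Sx #= `I_n)%card -> shatters Hcls Sx -> (n <= d)%N.
Proof.
move=> cS sh.
pose P x := [set g | (g < d)%N /\ exists j, (j < K)%N /\ B (center g j) x].
pose grp x := xget 0%N (P x).
have memS : forall x, Sx x -> P x (grp x).
  move=> x Sxx; apply: xgetPex.
  have [h [S ->] Hh] := sh (fun _ => true).
  have := Hh x Sxx => /asboolP [g [m [gd mk bx _]]].
  exists g; split => //; exists (idx (pathr (S g) m)); split => //.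
  by rewrite idx_ltK // size_pathr.
have inj : {in Sx &, injective grp}.
  move=> x1 x2 /set_mem S1 /set_mem S2 eg.
  apply: contrapT => nx.
  have [gd [j1 [j1K b1]]] := memS x1 S1.
  have [_ [j2 [j2K b2]]] := memS x2 S2.
  rewrite -eg in b2.
  have [ej|nej] := eqVneq j1 j2.
    subst j2.
    have [h [S ->] Hh] := sh (fun z => `[< z = x1 >]).
    have := hyp_ball S (cidx_lt gd j1K) b1 b2.
    rewrite (Hh x1 S1) (Hh x2 S2).
    have -> : `[< x1 = x1 >] = true by apply/asboolP.
    move=> /esym /asboolP; exact: nesym nx.
  have [h [S ->] Hh] := sh (fun _ => true).
  have := Hh x1 S1 => /(hyp_inv gd j1K b1) [m1 [m1k e1 Sm1]].
  have := Hh x2 S2 => /(hyp_inv gd j2K b2) [m2 [m2k e2 Sm2]].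
  have [m12|m21|em] := ltngtP m1 m2.
  - exact: (key sh S1 S2 nx gd j1K j2K b1 b2 m12 m2k e1 Sm1 e2).
  - exact: (key sh S2 S1 (nesym nx) gd j2K j1K b2 b1 m21 m1k e2 Sm2 e1).
  - by subst m2; rewrite e1 in e2; rewrite e2 eqxx in nej.
have h1 : (`I_n #= grp @` Sx)%card.
  apply: card_eq_trans (card_esym cS) _.
  exact: card_esym (inj_card_eq inj).
have h2 : (grp @` Sx #<= `I_d)%card.
  by apply: subset_card_le => g [x Sxx <-]; have [] := memS x Sxx.
rewrite -card_le_II; apply: card_le_trans h2.
by move: h1; rewrite card_eq_le => /andP [].
Qed.

Lemma vc_Hcls : vc_dim Hcls d.
Proof. split; [exact: vc_lower | exact: vc_upper]. Qed.


Definition maj (u : seq bool) := (count negb u <= count id u)%N.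
Definition mincR (u : seq bool) : R := ((size u)%:R - `|rs R u|) / 2.

Lemma rs_count u : rs R u = (count id u)%:R - (count negb u)%:R.
Proof. elim: u => [|[] u IH] /=; rewrite ?IH ?natrD /=; lra. Qed.

Lemma count_maj u : (count (fun y => y != maj u) u)%:R = mincR u.
Proof.
rewrite /mincR rs_count.
have hs : size u = (count id u + count negb u)%N.
  by rewrite -(count_predC id u); congr addn; apply: eq_count.
rewrite hs /maj; case: (leqP (count negb u) (count id u)) => h.
- have -> : count (fun y => y != true) u = count negb u by apply: eq_count => -[].
  rewrite natrD ger0_norm; last by rewrite subr_ge0 ler_nat.
  set a := (count id u)%:R; set b := (count negb u)%:R; by field.
- have -> : count (fun y => y != false) u = count id u by apply: eq_count => -[].
  rewrite natrD ler0_norm; last by rewrite subr_le0 ler_nat ltnW.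
  set a := (count id u)%:R; set b := (count negb u)%:R; by field.
Qed.

Lemma sum_count (P : pred bool) u : \sum_(y <- u) (P y)%:R = (count P u)%:R :> R.
Proof. by elim: u => [|y u IH]; rewrite ?big_nil ?big_cons ?IH //= natrD. Qed.

Lemma pert_loss_ge0 h p : 0 <= pert_loss rho gamma h p.
Proof.
rewrite /pert_loss.
have hs : has_sup [set ((h z != p.2)%:R : R) | z in ball_rho rho p.1 gamma].
  split; first by exists ((h p.1 != p.2)%:R); exists p.1 => //; exact: ball_center.
  by exists 1 => r [z _ <-]; case: (h z != p.2).
have := sup_upper_bound hs; move=> /(_ ((h p.1 != p.2)%:R)).
move=> H; apply: le_trans (H _) => //; last by exists p.1 => //; exact: ball_center.
Qed.

Lemma pert_center S g n y : (g < d)%N -> (n < k)%N ->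
  pert_loss rho gamma (hyp S) (center g (idx (pathr (S g) n)), y) = (S g n != y)%:R.
Proof.
move=> gd nk; rewrite /pert_loss /=.
set E := (X in sup X).
have -> : E = [set ((S g n != y)%:R : R)]; last by rewrite sup1.
apply/seteqP; split => r.
  by move=> [z bz <-]; rewrite (hyp_center gd nk bz).
move=> -> /=; exists (center g (idx (pathr (S g) n))); first exact: ball_center.
by rewrite (hyp_center gd nk (ball_center _)).
Qed.

Definition query (bs : seq bool) : X :=
  let b := size bs in
  center (b %/ k) (idx (pathr (fun l => nth false bs ((b %/ k) * k + l)) (b %% k))).

Fixpoint gen (bs : seq bool) (ms : seq nat) (ys : seq bool) : seq (X * bool) :=
  if ms is m :: ms' then
    [seq (query bs, y) | y <- take m ys] ++ gen (rcons bs (maj (take m ys))) ms' (drop m ys)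
  else [::].

Fixpoint bits (bs : seq bool) (ms : seq nat) (ys : seq bool) : seq bool :=
  if ms is m :: ms' then bits (rcons bs (maj (take m ys))) ms' (drop m ys) else bs.

Definition Sig (BS : seq bool) g l := nth false BS (g * k + l).

Fixpoint blockloss (ms : seq nat) (ys : seq bool) : R :=
  if ms is m :: ms' then mincR (take m ys) + blockloss ms' (drop m ys) else 0.

Lemma bits_prefix ms bs ys i : (i < size bs)%N -> nth false (bits bs ms ys) i = nth false bs i.
Proof.
elim: ms bs ys => [|m ms IH] bs ys ib; first by [].
rewrite [bits _ _ _]/= IH; first by rewrite nth_rcons ib.
by rewrite size_rcons; exact: ltnW.
Qed.

Lemma bits_next m ms bs ys : nth false (bits bs (m :: ms) ys) (size bs) = maj (take m ys).
Proof.
rewrite [bits _ _ _]/= bits_prefix; last by rewrite size_rcons.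
by rewrite nth_rcons ltnn eqxx.
Qed.

Lemma loss_gen ms bs ys : (size bs + size ms <= d * k)%N ->
  \sum_(p <- gen bs ms ys) pert_loss rho gamma (hyp (Sig (bits bs ms ys))) p = blockloss ms ys.
Proof.
elim: ms bs ys => [|m ms IH] bs ys /=; first by rewrite big_nil.
move=> hs.
rewrite big_cat /= -(IH (rcons bs (maj (take m ys))) (drop m ys)); last by rewrite size_rcons addSnnS.
congr (_ + _).
set BS := bits _ ms _.
have BSE : BS = bits bs (m :: ms) ys by [].
set b := size bs.
have bdk : (b < d * k)%N by rewrite /b; lia.
have gd : (b %/ k < d)%N by rewrite ltn_divLR.
have nk : (b %% k < k)%N by rewrite ltn_pmod.
have eb : b = (b %/ k * k + b %% k)%N by rewrite -divn_eq.
have eq : query bs = center (b %/ k) (idx (pathr (Sig BS (b %/ k)) (b %% k))).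
  rewrite /query -/b; congr (center _ (idx _)); apply: pathr_ext => l ln.
  rewrite /Sig BSE bits_prefix //. rewrite -/b {2}eb ltn_add2l //.
rewrite big_map.
rewrite (eq_bigr (fun y => ((fun y => y != maj (take m ys)) y)%:R)); last first.
  move=> y _; rewrite eq pert_center //.
  by rewrite /Sig -eb BSE bits_next eq_sym.
by rewrite sum_count count_maj.
Qed.

Lemma size_gen ms bs ys : size ys = sumn ms -> size (gen bs ms ys) = sumn ms.
Proof.
elim: ms bs ys => [|m ms IH] bs ys //= sy.
rewrite size_cat size_map size_take IH; last by rewrite size_drop sy addKn.
by rewrite sy; case: ltnP => h; lia.
Qed.

Section Learner.
Variable L : learner R X.

Lemma exp_cat hist A Bs : exp_mistakes_from L hist (A ++ Bs) =
  exp_mistakes_from L hist A + exp_mistakes_from L (hist ++ A) Bs.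
Proof.
elim: A hist => [|[x y] A IH] hist /=; first by rewrite cats0 add0r.
by rewrite IH cat_rcons addrA.
Qed.

Lemma exp_block m hist x :
  avg R m (fun u => exp_mistakes_from L hist [seq (x, y) | y <- u]) = m%:R / 2.
Proof.
elim: m hist => [|m IH] hist /=; first by rewrite mul0r.
rewrite !avgD !avg_cst !IH mulrSr; by field.
Qed.

Lemma exp_gen ms bs hist :
  avg R (sumn ms) (fun ys => exp_mistakes_from L hist (gen bs ms ys)) = (sumn ms)%:R / 2.
Proof.
elim: ms bs hist => [|m ms IH] bs hist /=; first by rewrite mul0r.
rewrite avg_cat.
rewrite (avg_ext _ _ _ (fun u => exp_mistakes_from L hist [seq (query bs, y) | y <- u] + (sumn ms)%:R / 2)).
  by rewrite avgD avg_cst exp_block natrD; field.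
move=> u su.
rewrite (avg_ext _ _ _ (fun v => exp_mistakes_from L hist [seq (query bs, y) | y <- u] +
   exp_mistakes_from L (hist ++ [seq (query bs, y) | y <- u]) (gen (rcons bs (maj u)) ms v))).
  by rewrite avgD avg_cst IH.
by move=> v _; rewrite /= take_size_cat // drop_size_cat // exp_cat.
Qed.
End Learner.

Lemma avg_blockloss ms :
  avg R (sumn ms) (blockloss ms) = \sum_(m <- ms) avg R m mincR.
Proof.
elim: ms => [|m ms IH] /=; first by rewrite big_nil.
rewrite big_cons avg_cat -IH.
rewrite (avg_ext _ _ _ (fun u => mincR u + avg R (sumn ms) (blockloss ms))).
  by rewrite avgD avg_cst.
move=> u su; rewrite (avg_ext _ _ _ (fun v => mincR u + blockloss ms v)).
  by rewrite avgD avg_cst.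
by move=> v _; rewrite /= take_size_cat // drop_size_cat.
Qed.

Lemma avg_mincR m : avg R m mincR = m%:R / 2 - avg R m (fun u => `|rs R u|) / 2.
Proof.
rewrite (avg_ext _ _ _ (fun u => 2^-1 * (m%:R) - 2^-1 * `|rs R u|)).
  by rewrite avgB !avgZ !avg_cst; field.
by move=> u su; rewrite /mincR su; field.
Qed.

Lemma game (L : learner R X) ms : (size ms <= d * k)%N ->
  exists s, size s = sumn ms /\
    \sum_(m <- ms) avg R m (fun u => `|rs R u|) / 2 <=
      exp_mistakes L s - opt_pert rho gamma Hcls s.
Proof.
move=> hs.
pose F ys := exp_mistakes L (gen [::] ms ys) - blockloss ms ys.
have [ys [sy Hy]] := avg_exists R (sumn ms) F.
exists (gen [::] ms ys); split; first exact: size_gen.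
have hopt : opt_pert rho gamma Hcls (gen [::] ms ys) <= blockloss ms ys.
  rewrite -(@loss_gen ms [::] ys) //.
  apply: ge_inf.
    exists 0 => r [h _ <-]; apply: sumr_ge0 => p _; exact: pert_loss_ge0.
  by exists (hyp (Sig (bits [::] ms ys))) => //; exists (Sig (bits [::] ms ys)).
have eavg : avg R (sumn ms) F = \sum_(m <- ms) avg R m (fun u => `|rs R u|) / 2.
  rewrite /F avgB /exp_mistakes exp_gen avg_blockloss.
  under eq_bigr do rewrite avg_mincR.
  rewrite big_split /= sumrN.
  have -> : \sum_(i <- ms) (i%:R / 2 : R) = (sumn ms)%:R / 2.
    elim: (ms) => [|m' ms' IH]; rewrite ?big_nil ?big_cons ?IH /= ?mul0r // natrD; lra.
  rewrite opprB addrCA subrr addr0.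
  by [].
rewrite -eavg; apply: le_trans Hy _.
rewrite /F; lra.
Qed.

End Struct.

Lemma sq_le (R : realType) (x y : R) : 0 <= x -> 0 <= y -> x ^+ 2 <= y ^+ 2 -> x <= y.
Proof. by move=> x0 y0; rewrite ler_pXn2r // nnegrE. Qed.

Lemma block_lb (R : realType) q m : (q <= m)%N ->
  Num.sqrt (q%:R : R) / 5 <= avg R m (fun u => `|rs R u|).
Proof.
move=> qm.
have E0 := avg_abs_ge0 R m.
have h := avg_abs_sq R m.
apply: sq_le; [by rewrite divr_ge0 ?sqrtr_ge0 | exact: E0 |].
rewrite exprMn sqr_sqrtr // .
have : (q%:R : R) <= m%:R by rewrite ler_nat.
set E := avg R m _ in E0 h *.
move=> hq.
have e : (5 : R)^-1 ^+ 2 = 25^-1 by rewrite expr2 -invfM -natrM.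
rewrite e.
have : (q%:R : R) / 25 <= m%:R / 24.
  rewrite ler_pdivrMr // mulrAC ler_pdivlMr //.
  have : (0 : R) <= q%:R by [].
  lra.
lra.
Qed.

Lemma sum_lb (R : realType) q ms : all (fun m => q <= m)%N ms ->
  (size ms)%:R * Num.sqrt (q%:R : R) / 10 <=
    \sum_(m <- ms) avg R m (fun u => `|rs R u|) / 2.
Proof.
elim: ms => [|m ms IH] /=; first by rewrite big_nil !mul0r.
move=> /andP [qm hall].
rewrite big_cons -natr1.
have := IH hall; have := block_lb R qm.
lra.
Qed.

Theorem theorem4 :
  exists c : Rdefinitions.R, 0 < c /\
  forall (X : Type) (rho : X -> X -> Rdefinitions.R) (gamma : Rdefinitions.R)
         (N d : nat),
    is_metric rho -> 0 < gamma ->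
    covering_number rho (2 * gamma) N ->
    (1 <= d)%N -> (d <= N)%N ->
    exists H : set (X -> bool),
      vc_dim H d /\
      forall T : nat,
        (d%:R * ln (N%:R / d%:R) <= T%:R :> Rdefinitions.R) ->
        forall L : learner Rdefinitions.R X, valid_learner L ->
        exists s : seq (X * bool),
          size s = T /\
          exp_mistakes L s - opt_pert rho gamma H s
            >= c * Num.sqrt (T%:R * d%:R * ln (N%:R / d%:R)).
Proof.
exists (1 / 20); split; first by rewrite divr_gt0.
move=> X rho gamma N d hm g0 cov d1 dN.
have N0 : (0 < N)%N by apply: leq_trans d1 dN.
have [c sep] := packing hm (ltW (mulr_gt0 (ltr0n _ 2) g0)) cov N0.
pose K := (N %/ d)%N.
pose k := trunc_log 2 K.+1.
have K1 : (0 < K)%N by rewrite divn_gt0.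
have dKN : (d * K <= N)%N by rewrite mulnC leq_trunc_div.
have kK : (2 ^ k <= K.+1)%N by apply: trunc_logP.
have k0 : (0 < k)%N by rewrite trunc_log_gt0 /= ltnS.
exists (Hcls rho gamma d K k c); split; first exact (vc_Hcls hm g0 sep dKN kK k0).
move=> T hT L _.
have dpos : (0 : Rdefinitions.R) < d%:R by rewrite ltr0n.
have Nd1 : 1 <= (N%:R / d%:R : Rdefinitions.R) by rewrite ler_pdivlMr // mul1r ler_nat.
have ln0 : 0 <= ln (N%:R / d%:R : Rdefinitions.R) by apply: ln_ge0.
set D := (d%:R * ln (N%:R / d%:R) : Rdefinitions.R).
have D0 : 0 <= D by rewrite /D mulr_ge0.
have lnk : ln (N%:R / d%:R : Rdefinitions.R) <= 2 * k%:R.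
  have h1 : (N%:R / d%:R : Rdefinitions.R) <= (2 ^ k.+1)%:R.
    rewrite ler_pdivrMr // -natrM ler_nat.
    apply: ltnW; apply: (leq_trans (ltn_ceil N (leq_trans (ltnSn 0) d1))).
    rewrite leq_mul2r; apply/orP; right; exact: ltnW (trunc_log_ltn _ (ltnSn 1)).
  have h2 : ln (N%:R / d%:R : Rdefinitions.R) <= ln ((2 ^ k.+1)%:R).
    by rewrite ler_ln // posrE ?ltr0n ?expn_gt0 // (lt_le_trans ltr01 Nd1).
  rewrite natrX lnXn // in h2.
  have h3 : ln (2 : Rdefinitions.R) <= 1 by have := @le_ln1Dx _ 1 ltac:(lra); rewrite (_ : 1 + 1 = 2) //.
  have h4 : ln (2 : Rdefinitions.R) *+ k.+1 <= k.+1%:R.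
    by rewrite lerMn2r h3 orbT.
  have : (1 : Rdefinitions.R) <= k%:R by rewrite ler1n.
  rewrite -natr1 in h4; lra.
have D2 : D <= 2 * (d * k)%:R.
  rewrite /D natrM; have : 0 <= (d%:R : Rdefinitions.R) by [].
  nra.
pose B := minn (d * k) T.
have DB : D <= 2 * B%:R.
  have hTD : D <= T%:R := hT.
  rewrite /B; case: (leqP (d * k) T) => h //.
  lra.
have dk0 : (0 < d * k)%N by rewrite muln_gt0 d1.
case: (posnP B) => [B0|Bpos].
  have T0 : T = 0%N by move: B0; rewrite /B; case: (leqP (d * k) T); lia.
  have [s [ss hs]] := game hm g0 sep dKN kK k0 L (ms := [::]) isT.
  exists s; split; first by rewrite ss T0.
  rewrite big_nil in hs.
  by rewrite T0 mul0r mul0r sqrtr0 mulr0.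
pose q := (T %/ B)%N.
pose ms := rcons (nseq B.-1 q) (q + T %% B)%N.
have sms : size ms = B by rewrite size_rcons size_nseq prednK.
have Tms : sumn ms = T.
  rewrite sumn_rcons sumn_nseq; have := divn_eq T B; rewrite -/q.
  have := prednK Bpos; move: (B.-1) => B1 <-; nia.
have allq : all (fun m => q <= m)%N ms.
  by rewrite all_rcons leq_addr /=; apply/allP => x /nseqP [-> _].
have BT : (B <= T)%N by apply: geq_minr.
have q1 : (0 < q)%N by rewrite divn_gt0.
have TqB : (T <= 2 * q * B)%N.
  have e := divn_eq T B; have r := ltn_pmod T Bpos.
  rewrite -/q in e; nia.
have [s [ss hs]] := game hm g0 sep dKN kK k0 L (ms := ms) ltac:(by rewrite sms geq_minl).
exists s; split; first by rewrite ss Tms.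
apply: le_trans hs.
apply: le_trans (sum_lb _ allq).
rewrite sms.
apply: sq_le.
- by rewrite mulr_ge0 ?sqrtr_ge0.
- by rewrite !mulr_ge0 ?sqrtr_ge0.
rewrite -mulrA -/D.
have TD0 : 0 <= (T%:R : Rdefinitions.R) * D by rewrite mulr_ge0.
rewrite !exprMn sqr_sqrtr //.
rewrite sqr_sqrtr // expr1n mul1r.
have TqBR : (T%:R : Rdefinitions.R) <= 2 * q%:R * B%:R by rewrite -!natrM ler_nat.
have hTD : (T%:R : Rdefinitions.R) * D <= T%:R * (2 * B%:R) by rewrite ler_wpM2l.
have B0' : (0 : Rdefinitions.R) <= B%:R by [].
have q0' : (0 : Rdefinitions.R) <= q%:R by [].
have T0' : (0 : Rdefinitions.R) <= T%:R by [].
have key : (T%:R : Rdefinitions.R) * D <= 4 * (B%:R ^+ 2 * q%:R).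
  have : (T%:R : Rdefinitions.R) * (2 * B%:R) <= (2 * q%:R * B%:R) * (2 * B%:R).
    by rewrite ler_wpM2r // mulr_ge0.
  rewrite expr2; nra.
have E1 : (20 : Rdefinitions.R)^-1 ^+ 2 * (T%:R * D) = (T%:R * D) / 400 by field.
have E2 : (B%:R ^+ 2 * q%:R) * (10 : Rdefinitions.R)^-1 ^+ 2 = (4 * (B%:R ^+ 2 * q%:R)) / 400 by field.
rewrite E1 E2 ler_pM2r // invr_gt0 //.
Qed.
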